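(* Let $k\ge1$ and $\boldsymbol F\in\mathcal P_k$. Then the treewidth of the underlying graph of $\boldsymbol F$ is at most $3k-1$.
   Context: A $(k,k)$-bilabelled graph is $\boldsymbol F=(F,\boldsymbol u,\boldsymbol v)$ with $\boldsymbol u,\boldsymbol v\in V(F)^k$; $F$ is the underlying graph. Series composition $\boldsymbol F\cdot\boldsymbol F'$: disjoint union with $v_i$ identified with $u'_i$, multiple edges removed, labels $(\boldsymbol u,\boldsymbol v')$. Parallel composition $\boldsymbol F\odot\boldsymbol F'$: identify $u_i$ with $u'_i$ and $v_i$ with $v'_i$, multiple edges removed. For $\sigma\in\mathfrak S_{2k}$, $\boldsymbol F^\sigma$ has in-labels $(w_{\sigma(1)},\dots,w_{\sigma(k)})$ and out-labels $(w_{\sigma(k+1)},\dots,w_{\sigma(2k)})$, $\boldsymbol w=\boldsymbol u\boldsymbol v$. $\mathscr C_k$ = cyclic group of rotations of $(1,\dots,k,2k,\dots,k+1)$. Bilabelled minors: via edge contraction, edge deletion, deletion of unlabelled vertices. $\boldsymbol C_k$: vertices $[2k]$, in-labels $(1,\dots,k)$, out-labels $(k+1,\dots,2k)$, edges $\{i,i+1\}$ ($i\in[2k]\setminus\{k,2k\}$), $\{1,k+1\},\{k,2k\}$; $\boldsymbol M_k$: same vertices/labels, edges $\{i,i+k\}$. $\mathcal Q_k^P,\mathcal Q_k^S$ = bilabelled minors of $\boldsymbol C_k,\boldsymbol M_k$; $\mathcal Q_k$ their union. $\mathcal P_k$ = smallest class containing $\mathcal Q_k$, closed under series composition, $\boldsymbol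 F\mapsto\boldsymbol F\odot\boldsymbol Q$ ($\boldsymbol Q\in\mathcal Q_k^P$), and $\boldsymbol F\mapsto\boldsymbol F^\sigma$ ($\sigma\in\mathscr C_k$). *)

(* Defs.v *)
From mathcomp Require Import all_boot all_fingroup.
Set Implicit Arguments. Unset Strict Implicit. Unset Printing Implicit Defensive.

Definition symr (T : Type) (r : rel T) : rel T := fun a b => r a b || r b a.

Lemma symr_sym (T : Type) (r : rel T) : symmetric (symr r).
Proof. by move=> a b; rewrite /symr orbC. Qed.

(* a (finite) tree: nonempty, loopless, symmetric, connected, and every edge
   is a bridge (minimally connected) *)
Definition is_tree (T : finType) (e : rel T) : Prop :=
  [/\ 0 < #|T|, symmetric e, irreflexive e,
      (forall x y, connect e x y) &
      (forall x y, e x y ->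
         ~~ connect (fun a b => e a b &&
                       ~~ (((a == x) && (b == y)) || ((a == y) && (b == x)))) x y)].

Definition tree_decomposition (V : finType) (E : rel V)
    (T : finType) (e : rel T) (B : T -> {set V}) : Prop :=
  [/\ is_tree e,
      (forall x : V, exists t, x \in B t),
      (forall x y : V, E x y -> exists t, (x \in B t) && (y \in B t)) &
      (forall (x : V) t1 t2, x \in B t1 -> x \in B t2 ->
         connect (fun a b => [&& e a b, x \in B a & x \in B b]) t1 t2)].

Definition treewidth_le (V : finType) (E : rel V) (w : nat) : Prop :=
  exists (T : finType) (e : rel T) (B : T -> {set V}),
    tree_decomposition E e B /\ forall t, #|B t| <= w.+1.

(* in-labels [bu], out-labels [bv]; edges given by a symmetric relation
   (so multiple edges are automatically identified) *)
Record bgraph (k : nat) := BGraph {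
  bV : finType;
  bE : rel bV;
  bE_sym : symmetric bE;
  bu : 'I_k -> bV;
  bv : 'I_k -> bV }.
Arguments bV {k} b.
Arguments bE {k} b _ _.
Arguments bE_sym {k} b _ _.
Arguments bu {k} b _.
Arguments bv {k} b _.

Definition bg_iso k (G H : bgraph k) : Prop :=
  exists h : bV G -> bV H,
    [/\ bijective h, (forall a b, bE H (h a) (h b) = bE G a b),
        (forall i, h (bu G i) = bu H i) & (forall i, h (bv G i) = bv H i)].

Definition same_pair (T : eqType) (x y a b : T) : bool :=
  ((a == x) && (b == y)) || ((a == y) && (b == x)).

Definition del_edge k (G H : bgraph k) : Prop :=
  exists x y, bE G x y /\
  exists h : bV G -> bV H,
    [/\ bijective h,
        (forall a b, bE H (h a) (h b) = bE G a b && ~~ same_pair x y a b),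
        (forall i, h (bu G i) = bu H i) & (forall i, h (bv G i) = bv H i)].

Definition del_vertex k (G H : bgraph k) : Prop :=
  exists x : bV G,
    (forall i, bu G i != x /\ bv G i != x) /\
  exists h : bV H -> bV G,
    [/\ injective h,
        (forall y, y != x -> exists z, h z = y),
        (forall z, h z != x),
        (forall a b, bE H a b = bE G (h a) (h b)) &
        ((forall i, h (bu H i) = bu G i) /\ (forall i, h (bv H i) = bv G i))].

Definition contract_edge k (G H : bgraph k) : Prop :=
  exists x y, bE G x y /\ x != y /\
  exists h : bV G -> bV H,
    [/\ (forall p, exists a, h a = p),
        (forall a b, (h a == h b) = (a == b) || same_pair x y a b),
        (forall p q, bE H p q <->
           exists a b, [/\ h a = p, h b = q, bE G a b & ~~ same_pair x y a b]),
        (forall i, h (bu G i) = bu H i) & (forall i, h (bv G i) = bv H i)].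

Inductive bminor k (G : bgraph k) : bgraph k -> Prop :=
  | bminor_iso H : bg_iso G H -> bminor G H
  | bminor_del_edge H H' : bminor G H -> del_edge H H' -> bminor G H'
  | bminor_del_vertex H H' : bminor G H -> del_vertex H H' -> bminor G H'
  | bminor_contract H H' : bminor G H -> contract_edge H H' -> bminor G H'.

(* vertices 'I_(k+k); in-label i is i, out-label i is k+i *)
Definition C_adj k : rel 'I_(k + k) := fun a b =>
  [|| (a.+1 == b :> nat) && (a != k.-1 :> nat),
      (a == 0 :> nat) && (b == k :> nat)
    | (a == k.-1 :> nat) && (b == (k + k).-1 :> nat)].

Definition M_adj k : rel 'I_(k + k) := fun a b => (a + k == b :> nat).

Definition Ck (k : nat) : bgraph k :=
  @BGraph k _ (symr (@C_adj k)) (@symr_sym _ _) (lshift k) (@rshift k k).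

Definition Mk (k : nat) : bgraph k :=
  @BGraph k _ (symr (@M_adj k)) (@symr_sym _ _) (lshift k) (@rshift k k).

(* H (with vertex map h from T) is the graph (T,E) with vertices identified
   along the equivalence relation generated by [ident], multiple edges removed *)
Definition glue (T : finType) (E : rel T) (ident : rel T)
    (W : finType) (EW : rel W) (h : T -> W) : Prop :=
  [/\ (forall p, exists x, h x = p),
      (forall x y, (h x == h y) = connect (symr ident) x y) &
      (forall p q, EW p q <-> exists x y, [/\ h x = p, h y = q & E x y])].

Definition sumE {k} (F F' : bgraph k) : rel (bV F + bV F')%type :=
  fun s t => match s, t with
             | inl a, inl b => bE F a b
             | inr a, inr b => bE F' a b
             | _, _ => false
             end.
Arguments sumE {k} F F' _ _.

Definition series_comp k (F F' H : bgraph k) : Prop :=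
  exists h : (bV F + bV F')%type -> bV H,
    [/\ glue (sumE F F')
          (fun s t => match s, t with
                      | inl a, inr b => [exists i, (a == bv F i) && (b == bu F' i)]
                      | _, _ => false end)
          (bE H) h,
        (forall i, bu H i = h (inl (bu F i))) &
        (forall i, bv H i = h (inr (bv F' i)))].

Definition parallel_comp k (F F' H : bgraph k) : Prop :=
  exists h : (bV F + bV F')%type -> bV H,
    [/\ glue (sumE F F')
          (fun s t => match s, t with
                      | inl a, inr b =>
                          [exists i, ((a == bu F i) && (b == bu F' i))
                                     || ((a == bv F i) && (b == bv F' i))]
                      | _, _ => false end)
          (bE H) h,
        (forall i, bu H i = h (inl (bu F i))) &
        (forall i, bv H i = h (inl (bv F i)))].

Definition bw k (F : bgraph k) (j : 'I_(k + k)) : bV F :=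
  match split j with inl a => bu F a | inr b => bv F b end.

Definition bperm k (F : bgraph k) (s : {perm 'I_(k + k)}) : bgraph k :=
  @BGraph k (bV F) (bE F) (bE_sym F)
    (fun i => bw F (s (lshift k i))) (fun i => bw F (s (@rshift k k i))).

(* position of a (0-based) index in the sequence (0,...,k-1,2k-1,...,k);
   this map is an involution of [0,2k) *)
Definition cycpos (k t : nat) : nat := if t < k then t else (k + k).-1 - (t - k).

(* C_k : the rotations of the sequence (1,...,k,2k,...,k+1) *)
Definition in_Ck k (s : {perm 'I_(k + k)}) : Prop :=
  exists j : nat, forall i : 'I_(k + k),
    val (s i) = cycpos k ((cycpos k i + j) %% (k + k)).

Definition QkP k (Q : bgraph k) : Prop := bminor (Ck k) Q.
Definition QkS k (Q : bgraph k) : Prop := bminor (Mk k) Q.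

Inductive Pk k : bgraph k -> Prop :=
  | Pk_Q F : QkP F \/ QkS F -> Pk F
  | Pk_series F F' H : Pk F -> Pk F' -> series_comp F F' H -> Pk H
  | Pk_parallel F Q H : Pk F -> QkP Q -> parallel_comp F Q H -> Pk H
  | Pk_perm F s : Pk F -> in_Ck s -> Pk (bperm F s).

(* Main.v *)
Require Import Defs.
From mathcomp Require Import all_boot all_fingroup.
Set Implicit Arguments. Unset Strict Implicit. Unset Printing Implicit Defensive.

Lemma connect_map (T U : finType) (r : rel T) (r' : rel U) (f : T -> U) :
  (forall a b, r a b -> r' (f a) (f b)) ->
  forall a b, connect r a b -> connect r' (f a) (f b).
Proof.
move=> H a b /connectP [p pth ->]; elim: p a pth => [|c p IH] a /=.
  by move=> _; apply: connect0.
case/andP=> rc pth; apply: connect_trans (connect1 (H _ _ rc)) (IH _ pth).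
Qed.

Lemma connect_inv (T : finType) (r : rel T) (g : T -> bool) :
  (forall a b, r a b -> g a = g b) -> forall a b, connect r a b -> g a = g b.
Proof.
move=> H a b /connectP [p pth ->]; elim: p a pth => [|c p IH] a //=.
by case/andP=> rc pth; rewrite (H _ _ rc) (IH _ pth).
Qed.

Lemma conn_iso (T : finType) (r : rel T) x y :
  connect r x y -> x != y -> exists z, r x z.
Proof.
case/connectP => [[|z p]] /=; first by move=> _ ->; rewrite eqxx.
by case/andP=> rz _ _ _; exists z.
Qed.

Lemma minus_sym (T : finType) (e : rel T) x y : symmetric e ->
  symmetric (fun a b => e a b && ~~ same_pair x y a b).
Proof.
move=> se a b; rewrite se /same_pair.
by case: (a == x); case: (b == y); case: (a == y); case: (b == x); rewrite ?orbF ?orbT.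
Qed.

Lemma tree_cut (T : finType) (e : rel T) x y : is_tree e -> e x y ->
  exists g : T -> bool, g x != g y /\
    forall a b, e a b -> ~~ same_pair x y a b -> g a = g b.
Proof.
case=> _ se _ _ br exy.
set e' := (fun a b => e a b && ~~ same_pair x y a b).
have cs : connect_sym e' by apply: sym_connect_sym; apply: minus_sym.
exists (connect e' x); split.
  by rewrite connect0; apply: br.
move=> a b eab nab.
have e'ab : e' a b by rewrite /e' eab.
rewrite (cs x a) (cs x b); apply: same_connect => //.
exact: connect1.
Qed.

Lemma cut_nconn (T : finType) (e : rel T) x y (g : T -> bool) :
  (forall a b, e a b -> ~~ same_pair x y a b -> g a = g b) -> g x != g y ->
  ~~ connect (fun a b => e a b && ~~ same_pair x y a b) x y.
Proof.
move=> H gxy; apply/negP => /(connect_inv _) => C.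
move: gxy; rewrite C ?eqxx //.
by move=> a b /andP [eab nab]; apply: H.
Qed.

Section Join.
Variables (T1 T2 : finType) (e1 : rel T1) (e2 : rel T2) (t1 : T1) (t2 : T2).

Definition jrel : rel (option (T1 + T2)) := fun x y =>
  match x, y with
  | Some (inl a), Some (inl b) => e1 a b
  | Some (inr a), Some (inr b) => e2 a b
  | None, Some (inl b) => b == t1
  | Some (inl a), None => a == t1
  | None, Some (inr b) => b == t2
  | Some (inr a), None => a == t2
  | _, _ => false end.

Lemma eqSl (a b : T1) : (Some (inl a) == Some (inl b) :> option (T1 + T2)) = (a == b).
Proof. by apply/eqP/eqP => [[]|->]. Qed.
Lemma eqSr (a b : T2) : (Some (inr a) == Some (inr b) :> option (T1 + T2)) = (a == b).
Proof. by apply/eqP/eqP => [[]|->]. Qed.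
Lemma eqSlr (a : T1) (b : T2) : (Some (inl a) == Some (inr b) :> option (T1 + T2)) = false.
Proof. by apply/eqP. Qed.
Lemma eqSrl (a : T1) (b : T2) : (Some (inr b) == Some (inl a) :> option (T1 + T2)) = false.
Proof. by apply/eqP. Qed.
Lemma eqSN (a : T1 + T2) : (Some a == None) = false. Proof. by []. Qed.
Lemma eqNS (a : T1 + T2) : (None == Some a) = false. Proof. by []. Qed.

Definition eqS := (eqSl, eqSr, eqSlr, eqSrl, eqSN, eqNS).

Hypotheses (tr1 : is_tree e1) (tr2 : is_tree e2).

Lemma jrel_sym : symmetric jrel.
Proof.
case: tr1 => _ s1 _ _ _; case: tr2 => _ s2 _ _ _.
by move=> [[a|a]|] [[b|b]|] //=; rewrite ?s1 ?s2.
Qed.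

Lemma conn_None x : connect jrel x None.
Proof.
case: tr1 => _ _ _ c1 _; case: tr2 => _ _ _ c2 _.
case: x => [[a|a]|]; last exact: connect0.
- apply: connect_trans (connect1 (_ : jrel (Some (inl t1)) None)); last by rewrite /= eqxx.
  by apply: (connect_map (f := fun a => Some (inl a))) (c1 a t1).
- apply: connect_trans (connect1 (_ : jrel (Some (inr t2)) None)); last by rewrite /= eqxx.
  by apply: (connect_map (f := fun a => Some (inr a))) (c2 a t2).
Qed.

Lemma jtree : is_tree jrel.
Proof.
split.
- by rewrite card_option.
- exact: jrel_sym.
- case: tr1 => _ _ i1 _ _; case: tr2 => _ _ i2 _ _.
  by move=> [[a|a]|] /=; rewrite ?i1 ?i2.
- move=> x y; apply: connect_trans (conn_None x) _.
  by rewrite (sym_connect_sym jrel_sym); apply: conn_None.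
- move=> [[a|a]|] [[b|b]|] //= eab.
  + have [g [gab Hg]] := tree_cut tr1 eab.
    apply: (@cut_nconn _ jrel _ _ (fun z => match z with Some (inl c) => g c | _ => g t1 end)) => //.
    move=> [[c|c]|] [[d|d]|] //=; rewrite /same_pair ?eqS //; first exact: Hg; by move=> /eqP ->.
  + move/eqP: eab => ->.
    apply: (@cut_nconn _ jrel _ _ (fun z => match z with Some (inl c) => true | _ => false end)) => //.
    by move=> [[c|c]|] [[d|d]|] //=; rewrite /same_pair ?eqS ?eqxx //= => /eqP ->; rewrite eqxx.
  + have [g [gab Hg]] := tree_cut tr2 eab.
    apply: (@cut_nconn _ jrel _ _ (fun z => match z with Some (inr c) => g c | _ => g t2 end)) => //.
    move=> [[c|c]|] [[d|d]|] //=; rewrite /same_pair ?eqS //; first exact: Hg; by move=> /eqP ->.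
  + move/eqP: eab => ->.
    apply: (@cut_nconn _ jrel _ _ (fun z => match z with Some (inr c) => true | _ => false end)) => //.
    by move=> [[c|c]|] [[d|d]|] //=; rewrite /same_pair ?eqS ?eqxx //= => /eqP ->; rewrite eqxx.
  + move/eqP: eab => ->.
    apply: (@cut_nconn _ jrel _ _ (fun z => match z with Some (inl c) => true | _ => false end)) => //.
    by move=> [[c|c]|] [[d|d]|] //=; rewrite /same_pair ?eqS ?eqxx //= => /eqP ->; rewrite eqxx.
  + move/eqP: eab => ->.
    apply: (@cut_nconn _ jrel _ _ (fun z => match z with Some (inr c) => true | _ => false end)) => //.
    by move=> [[c|c]|] [[d|d]|] //=; rewrite /same_pair ?eqS ?eqxx //= => /eqP ->; rewrite eqxx.
Qed.
End Join.

Section JoinTD.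
Variables (V1 V2 : finType).

Definition sumrel (E1 : rel V1) (E2 : rel V2) : rel (V1 + V2) := fun s t =>
  match s, t with
  | inl a, inl b => E1 a b
  | inr a, inr b => E2 a b
  | _, _ => false end.

Lemma mem_inl (S : {set V1}) a : (inl a \in [set @inl V1 V2 x | x in S]) = (a \in S).
Proof. by apply: mem_imset => x y []. Qed.
Lemma mem_inr (S : {set V2}) a : (inr a \in [set @inr V1 V2 x | x in S]) = (a \in S).
Proof. by apply: mem_imset => x y []. Qed.
Lemma mem_inlr (S : {set V1}) a : (inr a \in [set @inl V1 V2 x | x in S]) = false.
Proof. by apply/imsetP => [[x _]]. Qed.
Lemma mem_inrl (S : {set V2}) a : (inl a \in [set @inr V1 V2 x | x in S]) = false.
Proof. by apply/imsetP => [[x _]]. Qed.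
Definition memS := (mem_inl, mem_inr, mem_inlr, mem_inrl, in_setU, orbF, orFb).

Variables (T1 T2 : finType) (E1 : rel V1) (E2 : rel V2) (e1 : rel T1) (e2 : rel T2)
  (B1 : T1 -> {set V1}) (B2 : T2 -> {set V2}) (t1 : T1) (t2 : T2)
  (X1 : {set V1}) (X2 : {set V2}).

Definition jbag (t : option (T1 + T2)) : {set V1 + V2} :=
  match t with
  | None => [set inl x | x in X1] :|: [set inr x | x in X2]
  | Some (inl s) => [set inl x | x in B1 s]
  | Some (inr s) => [set inr x | x in B2 s]
  end.

Hypotheses (td1 : tree_decomposition E1 e1 B1) (td2 : tree_decomposition E2 e2 B2)
  (sX1 : X1 \subset B1 t1) (sX2 : X2 \subset B2 t2).

Lemma td_join : tree_decomposition (sumrel E1 E2) (jrel e1 e2 t1 t2) jbag.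
Proof.
case: td1 => tr1 c1 d1 p1; case: td2 => tr2 c2 d2 p2.
split.
- exact: jtree.
- move=> [a|a].
    by have [t ht] := c1 a; exists (Some (inl t)); rewrite /= memS.
  by have [t ht] := c2 a; exists (Some (inr t)); rewrite /= memS.
- move=> [a|a] [b|b] //= eab.
    by have [t /andP [ha hb]] := d1 a b eab; exists (Some (inl t)); rewrite /= !memS ha hb.
  by have [t /andP [ha hb]] := d2 a b eab; exists (Some (inr t)); rewrite /= !memS ha hb.
- move=> x.
  set R := (fun a b => [&& jrel e1 e2 t1 t2 a b, x \in jbag a & x \in jbag b]).
  have Rs : connect_sym R.
    apply: sym_connect_sym => a b; rewrite /R (@jrel_sym _ _ _ _ t1 t2 tr1 tr2).
    by case: (x \in jbag a); case: (x \in jbag b); rewrite ?andbF.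
  case: x @R Rs => [a|a] R Rs.
  + have H1 s s' : a \in B1 s -> a \in B1 s' -> connect R (Some (inl s)) (Some (inl s')).
      move=> hs hs'; apply: (connect_map (f := fun s => Some (inl s))) (p1 a s s' hs hs').
      by move=> u v /and3P [euv hu hv]; rewrite /R /= !memS euv hu hv.
    have H2 s : a \in B1 s -> a \in X1 -> connect R (Some (inl s)) None.
      move=> hs hX; have h1 : a \in B1 t1 by apply: (subsetP sX1).
      apply: connect_trans (H1 _ _ hs h1) (connect1 _).
      by rewrite /R /= !memS eqxx h1 hX.
    move=> [[s|s]|] [[s'|s']|] //=; rewrite ?memS //.
    * exact: H1.
    * exact: H2.
    * by move=> h h'; rewrite Rs; apply: H2.
  + have H1 s s' : a \in B2 s -> a \in B2 s' -> connect R (Some (inr s)) (Some (inr s')).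
      move=> hs hs'; apply: (connect_map (f := fun s => Some (inr s))) (p2 a s s' hs hs').
      by move=> u v /and3P [euv hu hv]; rewrite /R /= !memS euv hu hv.
    have H2 s : a \in B2 s -> a \in X2 -> connect R (Some (inr s)) None.
      move=> hs hX; have h1 : a \in B2 t2 by apply: (subsetP sX2).
      apply: connect_trans (H1 _ _ hs h1) (connect1 _).
      by rewrite /R /= !memS eqxx h1 hX.
    move=> [[s|s]|] [[s'|s']|] //=; rewrite ?memS //.
    * exact: H1.
    * exact: H2.
    * by move=> h h'; rewrite Rs; apply: H2.
Qed.
End JoinTD.

Lemma td_quot (V W T : finType) (E : rel V) (EW : rel W) (e : rel T)
  (B : T -> {set V}) (h : V -> W) (t0 : T) :
  tree_decomposition E e B -> (forall p, exists x, h x = p) ->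
  (forall p q, EW p q -> exists x y, [/\ h x = p, h y = q & E x y]) ->
  (forall x y, h x = h y -> x != y -> x \in B t0) ->
  tree_decomposition EW e (fun t => h @: B t).
Proof.
case=> tr c d p hs he hid; split => //.
- move=> w; have [x <-] := hs w; have [t ht] := c x.
  by exists t; apply: imset_f.
- move=> w w' /he [x [y [<- <- exy]]]; have [t /andP [hx hy]] := d x y exy.
  by exists t; rewrite !imset_f.
- move=> w s s' /imsetP [a ha ->] /imsetP [a' ha' eq].
  have mono b : subrel (fun u v => [&& e u v, b \in B u & b \in B v])
      (connect (fun u v => [&& e u v, h b \in h @: B u & h b \in h @: B v])).
    by move=> u v /and3P [euv hu hv]; apply: connect1; rewrite euv !imset_f.
  have [eaa|neq] := eqVneq a a'.
    subst a'; exact: (connect_sub (mono a) (p a s s' ha ha')).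
  have h0 : a \in B t0 by apply: (hid a a') neq.
  have h0' : a' \in B t0 by apply: (hid a' a); [by rewrite eq | by rewrite eq_sym].
  apply: connect_trans (connect_sub (mono a) (p a s t0 ha h0)) _.
  rewrite eq; exact: (connect_sub (mono a') (p a' t0 s' h0' ha')).
Qed.

Lemma card_img k (T : finType) (f : 'I_k -> T) : #|[set f i | i : 'I_k]| <= k.
Proof. by apply: leq_trans (leq_imset_card _ _) _; rewrite card_ord. Qed.

Lemma card_U (T : finType) (A B : {set T}) : #|A :|: B| <= #|A| + #|B|.
Proof. by rewrite cardsU leq_subr. Qed.

Definition lab k (F : bgraph k) : {set bV F} :=
  [set bu F i | i : 'I_k] :|: [set bv F i | i : 'I_k].

Lemma lab_u k (F : bgraph k) i : bu F i \in lab F.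
Proof. by rewrite in_setU imset_f. Qed.
Lemma lab_v k (F : bgraph k) i : bv F i \in lab F.
Proof. by rewrite in_setU orbC imset_f. Qed.

Lemma labP k (F : bgraph k) x : x \in lab F -> exists i, x = bu F i \/ x = bv F i.
Proof.
by rewrite in_setU => /orP [] /imsetP [i _ ->]; exists i; [left|right].
Qed.

Lemma card_lab k (F : bgraph k) : #|lab F| <= k + k.
Proof. by apply: leq_trans (card_U _ _) _; rewrite leq_add ?card_img. Qed.

Definition alllab k (F : bgraph k) := forall x : bV F, x \in lab F.

Lemma minor_alllab k (G H : bgraph k) : bminor G H -> alllab G -> alllab H.
Proof.
move=> m aG; elim: m => {H} [H [h [[g hg gh] _ hu hv]] | H H' _ IH [x [y [_ [h [[g hg gh] _ hu hv]]]]]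
  | H H' _ IH [x [_ [h [hi _ _ _ [hu hv]]]]] | H H' _ IH [x [y [_ [_ [h [hs _ _ hu hv]]]]]]] z.
- rewrite -(gh z); have [i [->|->]] := labP (aG (g z)); by rewrite ?hu ?hv ?lab_u ?lab_v.
- rewrite -(gh z); have [i [->|->]] := labP (IH (g z)); by rewrite ?hu ?hv ?lab_u ?lab_v.
- have [i [e|e]] := labP (IH (h z)).
    by rewrite -hu in e; rewrite (hi _ _ e) lab_u.
  by rewrite -hv in e; rewrite (hi _ _ e) lab_v.
- have [a <-] := hs z; have [i [->|->]] := labP (IH a); by rewrite ?hu ?hv ?lab_u ?lab_v.
Qed.

Lemma Ck_alllab k : alllab (Ck k).
Proof.
move=> x; case: (splitP x) => j e.
  have -> : x = lshift k j by apply: val_inj.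
  exact: (lab_u (Ck k) j).
have -> : x = rshift k j by apply: val_inj.
exact: (lab_v (Ck k) j).
Qed.

Lemma Mk_alllab k : alllab (Mk k).
Proof.
move=> x; case: (splitP x) => j e.
  have -> : x = lshift k j by apply: val_inj.
  exact: (lab_u (Mk k) j).
have -> : x = rshift k j by apply: val_inj.
exact: (lab_v (Mk k) j).
Qed.

Definition good k (F : bgraph k) := exists (T : finType) (e : rel T) (B : T -> {set bV F}) (t0 : T),
  [/\ tree_decomposition (bE F) e B, forall t, #|B t| <= 3 * k & lab F \subset B t0].

Lemma good_base k (F : bgraph k) : alllab F -> good F.
Proof.
move=> al; exists unit, (fun _ _ => false), (fun _ => setT), tt; split.
- split.
  + split.
    * by rewrite card_unit.
    * by [].
    * by [].
    * by move=> [] []; apply: connect0.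
    * by [].
  + by move=> x; exists tt; rewrite in_setT.
  + by move=> x y _; exists tt; rewrite !in_setT.
  + by move=> x [] [].
- move=> _; apply: leq_trans (subset_leq_card (_ : [set: bV F] \subset lab F)) _.
    by apply/subsetP => x _; apply: al.
  apply: leq_trans (card_lab F) _.
  by rewrite mulSn mulSn mul1n leq_addl.
- by apply/subsetP => x; rewrite in_setT.
Qed.

Definition memT := (mem_inl, mem_inr, mem_inlr, mem_inrl).

Lemma good_perm k (F : bgraph k) s : good F -> good (bperm F s).
Proof.
move=> [T [e [B [t0 [td sz lb]]]]]; exists T, e, B, t0; split => //.
apply: subset_trans lb; apply/subsetP => x /labP [i [->|->]] /=; rewrite /bw;
  by case: split => j; rewrite ?lab_u ?lab_v.
Qed.

Lemma glue_eq (T W : finType) (E ident : rel T) (EW : rel W) h x y :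
  glue E ident EW h -> ident x y -> h x = h y.
Proof.
case=> _ hh _ ixy; apply/eqP; rewrite hh; apply: connect1.
by rewrite /symr ixy.
Qed.

Lemma good_series k (F F' H : bgraph k) : good F -> good F' -> series_comp F F' H -> good H.
Proof.
move=> [T1 [e1 [B1 [t1 [td1 sz1 lb1]]]]] [T2 [e2 [B2 [t2 [td2 sz2 lb2]]]]] [h [gl hu hv]].
have gl' := gl; case: gl' => hs hh he.
have TD0 := td_join td1 td2 lb1 lb2.
have TD := td_quot (t0 := None) TD0 hs (fun p q H => (he p q).1 H) _.
have hid : forall x y, h x = h y -> x != y -> x \in jbag B1 B2 (lab F) (lab F') None.
  move=> x y /eqP; rewrite hh => /conn_iso C /C {C} [z]; rewrite /symr.
  case: x => [a|b]; case: z => [a'|b'] //=; rewrite ?orbF.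
    by case/existsP => i /andP [/eqP -> _]; rewrite in_setU ?memT ?orbF ?orFb lab_v.
  by case/existsP => i /andP [_ /eqP ->]; rewrite in_setU ?memT ?orbF ?orFb lab_u.
exists _, (jrel e1 e2 t1 t2), (fun t => [set h x | x in jbag B1 B2 (lab F) (lab F') t]), None; split; first exact: (TD hid).
- move=> [[s|s]|] /=.
  + by apply: leq_trans (leq_imset_card _ _) _; apply: leq_trans (leq_imset_card _ _) _.
  + by apply: leq_trans (leq_imset_card _ _) _; apply: leq_trans (leq_imset_card _ _) _.
  pose S3 := [set h (inl (bu F i)) | i : 'I_k] :|: [set h (inl (bv F i)) | i : 'I_k]
             :|: [set h (inr (bv F' i)) | i : 'I_k].
  apply: leq_trans (subset_leq_card (_ : _ \subset S3)) _.
    apply/subsetP => w /imsetP [[a|b] + ->]; rewrite in_setU ?memT ?orbF ?orFb.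
      by move=> /labP [i [->|->]]; rewrite !in_setU imset_f ?orbT.
    move=> /labP [i [->|->]]; last by rewrite !in_setU imset_f ?orbT.
    have -> : h (inr (bu F' i)) = h (inl (bv F i)).
      by symmetry; apply: (glue_eq gl); apply/existsP; exists i; rewrite !eqxx.
    by rewrite !in_setU imset_f ?orbT.
  apply: leq_trans (card_U _ _) _; rewrite mulSn mulSn mul1n addnA.
  by rewrite leq_add ?card_img // (leq_trans (card_U _ _)) // leq_add ?card_img.
- apply/subsetP => w /labP [i [->|->]]; rewrite ?hu ?hv; apply: imset_f; by rewrite in_setU ?memT ?orbF ?orFb ?lab_u ?lab_v.
Qed.

Lemma good_parallel k (F Q H : bgraph k) : good F -> QkP Q -> parallel_comp F Q H -> good H.
Proof.
move=> [T1 [e1 [B1 [t1 [td1 sz1 lb1]]]]] qQ [h [gl hu hv]].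
have [T2 [e2 [B2 [t2 [td2 sz2 lb2]]]]] := good_base (minor_alllab qQ (@Ck_alllab k)).
have gl' := gl; case: gl' => hs hh he.
have TD0 := td_join td1 td2 lb1 lb2.
have TD := td_quot (t0 := None) TD0 hs (fun p q H => (he p q).1 H) _.
have hid : forall x y, h x = h y -> x != y -> x \in jbag B1 B2 (lab F) (lab Q) None.
  move=> x y /eqP; rewrite hh => /conn_iso C /C {C} [z]; rewrite /symr.
  case: x => [a|b]; case: z => [a'|b'] //=; rewrite ?orbF.
    by case/existsP => i /orP [] /andP [/eqP -> _]; rewrite in_setU ?memT ?orbF ?orFb ?lab_u ?lab_v.
  by case/existsP => i /orP [] /andP [_ /eqP ->]; rewrite in_setU ?memT ?orbF ?orFb ?lab_u ?lab_v.
exists _, (jrel e1 e2 t1 t2), (fun t => [set h x | x in jbag B1 B2 (lab F) (lab Q) t]), None; split; first exact: (TD hid).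
- move=> [[s|s]|] /=.
  + by apply: leq_trans (leq_imset_card _ _) _; apply: leq_trans (leq_imset_card _ _) _.
  + by apply: leq_trans (leq_imset_card _ _) _; apply: leq_trans (leq_imset_card _ _) _.
  pose S2 := [set h (inl (bu F i)) | i : 'I_k] :|: [set h (inl (bv F i)) | i : 'I_k].
  apply: leq_trans (subset_leq_card (_ : _ \subset S2)) _.
    apply/subsetP => w /imsetP [[a|b] + ->]; rewrite in_setU ?memT ?orbF ?orFb.
      by move=> /labP [i [->|->]]; rewrite !in_setU imset_f ?orbT.
    move=> /labP [i [->|->]].
      have -> : h (inr (bu Q i)) = h (inl (bu F i)).
        by symmetry; apply: (glue_eq gl); apply/existsP; exists i; rewrite !eqxx.
      by rewrite !in_setU imset_f ?orbT.
    have -> : h (inr (bv Q i)) = h (inl (bv F i)).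
      by symmetry; apply: (glue_eq gl); apply/existsP; exists i; rewrite !eqxx orbT.
    by rewrite !in_setU imset_f ?orbT.
  apply: leq_trans (card_U _ _) _; rewrite mulSn mulSn mul1n.
  by rewrite leq_add ?card_img // (leq_trans (card_img _)) // leq_addr.
- apply/subsetP => w /labP [i [->|->]]; rewrite ?hu ?hv; apply: imset_f; by rewrite in_setU ?memT ?orbF ?orFb ?lab_u ?lab_v.
Qed.

Lemma Pk_good k (F : bgraph k) : Pk F -> good F.
Proof.
elim => {F} [F [q|q] | F F' H _ g1 _ g2 sc | F Q H _ g1 q pc | F s _ g1 _].
- exact: good_base (minor_alllab q (@Ck_alllab k)).
- exact: good_base (minor_alllab q (@Mk_alllab k)).
- exact: good_series g1 g2 sc.
- exact: good_parallel g1 q pc.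
- exact: good_perm.
Qed.

Theorem lemma4p5 (k : nat) (F : bgraph k) :
  1 <= k -> Pk F -> treewidth_le (bE F) (3 * k - 1).
Proof.
move=> k1 /Pk_good [T [e [B [t0 [td sz _]]]]]; exists T, e, B; split => // t.
have -> : (3 * k - 1).+1 = 3 * k by rewrite subn1 prednK // muln_gt0.
exact: sz.
Qed.
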